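(* Let $(\xi,\eta)$ satisfy $\xi>0$, $\eta>0$, $\xi+\eta<1$, and let $(i_n)$, $(j_n)$ be sequences of non-negative integers with $i_n/n\to\xi$ and $j_n/n\to\eta$ as $n\to\infty$. Let $A_{i,j}(1/n)$ denote the coefficient of $u^iv^jw^{n-i-j}$ in $P_{1/n}(u,v,w)$. Then $A_{i_n,j_n}(1/n)>0$ for all sufficiently large $n$, and $$\lim_{n\to\infty}\frac1n\ln A_{i_n,j_n}(1/n)=(1-\eta)\,H\!\Big(\frac{\xi}{1-\eta}\Big)+(\xi+\eta)\,H\!\Big(\frac{\xi}{\xi+\eta}\Big),$$ where $H(p)=-p\ln p-(1-p)\ln(1-p)$.
   Context: Markov polynomials. Let $x,y,z$ be indeterminates. Consider the set consisting of all rationals $\rho\in[0,1]$, each written in lowest terms $\rho=a/b$ with integers $a\ge 0$, $b\ge 1$, together with the formal symbol $1/0$. Define Laurent polynomials $M_\rho(x,y,z)$ recursively by $M_{1/0}=y$, $M_{0/1}=x$, $M_{1/1}=\frac{x^2+y^2}{z}$, and: whenever $a/b$, $c/d$ are in this set with $|ad-bc|=1$ and $(a+2c)/(b+2d)\in[0,1]$, then $M_{\frac{a+2c}{b+2d}}=\big(M_{c/d}^2+M_{\frac{a+c}{b+d}}^2\big)/M_{a/b}$. This determines $M_\rho$ for every rational $\rho\in[0,1]$. Numerator. For coprime $1\le a\le b$, $P_{a/b}(u,v,w)$ denotes the homogeneous polynomial of degree $a+b-1$ such that $M_{a/b}(x,y,z)=P_{a/b}(x^2,y^2,z^2)/(x^{a-1}y^{b-1}z^{a+b-1})$;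 its existence is known. *)

(* Defs.v *)
From mathcomp Require Import all_boot all_algebra fraction.
From mathcomp Require Import mpoly.

Set Implicit Arguments.
Unset Strict Implicit.
Unset Printing Implicit Defensive.
Import GRing.Theory.
Local Open Scope ring_scope.

Definition poly3 : Type := {mpoly int[3]}.

(** The field of rational functions in x,y,z; Laurent polynomials live in it. *)
Definition Frac : Type := {fraction poly3}.

Definition var3 (k : nat) : poly3 := 'X_(@inord 2 k).
Definition xF : Frac := tofrac (var3 0).
Definition yF : Frac := tofrac (var3 1).
Definition zF : Frac := tofrac (var3 2).

(** The defining recursion of the paper, applied
    with a/b = 1/(n-2), c/d = 0/1 (|1*1 - (n-2)*0| = 1, (a+2c)/(b+2d) = 1/n,
    (a+c)/(b+d) = 1/(n-1)), gives
        M_{1/n} = (M_{0/1}^2 + M_{1/(n-1)}^2) / M_{1/(n-2)},   n >= 2,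
    with M_{1/0} = y and M_{1/1} = (x^2+y^2)/z.
    [Mpair n] = (M_{1/n}, M_{1/(n+1)}). *)
Fixpoint Mpair (n : nat) : Frac * Frac :=
  match n with
  | 0 => (yF, (xF ^+ 2 + yF ^+ 2) / zF)
  | k.+1 => let: (a, b) := Mpair k in (b, (xF ^+ 2 + b ^+ 2) / a)
  end.

Definition M_one_over (n : nat) : Frac := (Mpair n).1.

(** [P] is the numerator P_{1/n}(u,v,w): homogeneous of degree a+b-1 = n and
    M_{1/n}(x,y,z) = P(x^2,y^2,z^2) / (x^{a-1} y^{b-1} z^{a+b-1})
                   = P(x^2,y^2,z^2) / (y^{n-1} z^n)      (a = 1, b = n). *)
Definition is_P_one_over (n : nat) (P : poly3) : Prop :=
  P \is n.-homog /\
  M_one_over n =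
    tofrac (P \mPo [tuple var3 0 ^+ 2; var3 1 ^+ 2; var3 2 ^+ 2])
    / tofrac (var3 1 ^+ n.-1 * var3 2 ^+ n).

(** A_{i,j}(1/n): the coefficient of u^i v^j w^(n-i-j) in P (set to 0 when
    i + j > n, where that monomial does not exist). *)
Definition coefA (P : poly3) (i j n : nat) : int :=
  if (i + j <= n)%N then P@_[multinom [tuple i; j; (n - i - j)%N]] else 0.

(* Main.v *)
Require Import Defs.
From mathcomp Require Import all_boot all_order all_algebra fraction ring.
Import Order.TTheory GRing.Theory Num.Theory.
Local Open Scope ring_scope.
Module Alg.
Import mpoly.

Definition t (i j l : nat) : 'X_{1..3} := [multinom [tuple i; j; l]].
Definition o0 : 'I_3 := Ordinal (isT : (0 < 3)%N).
Definition o1 : 'I_3 := Ordinal (isT : (1 < 3)%N).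
Definition o2 : 'I_3 := Ordinal (isT : (2 < 3)%N).
Lemma var0 : var3 0 = 'X_o0. Proof. by rewrite /var3; congr mpolyX; congr mnm1; apply/val_inj; rewrite /= inordK. Qed.
Lemma var1 : var3 1 = 'X_o1. Proof. by rewrite /var3; congr mpolyX; congr mnm1; apply/val_inj; rewrite /= inordK. Qed.
Lemma var2 : var3 2 = 'X_o2. Proof. by rewrite /var3; congr mpolyX; congr mnm1; apply/val_inj; rewrite /= inordK. Qed.

Lemma t_add0 i j l : (U_(o0) + t i j l)%MM = t i.+1 j l.
Proof. by apply/mnmP => -[[|[|[|k]]] Hk] //; rewrite mnmDE mnm1E. Qed.
Lemma t_add1 i j l : (U_(o1) + t i j l)%MM = t i j.+1 l.
Proof. by apply/mnmP => -[[|[|[|k]]] Hk] //; rewrite mnmDE mnm1E. Qed.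
Lemma t_add2 i j l : (U_(o2) + t i j l)%MM = t i j l.+1.
Proof. by apply/mnmP => -[[|[|[|k]]] Hk] //; rewrite mnmDE mnm1E. Qed.

Lemma coefMX_zero (p : poly3) (c : 'I_3) (m : 'X_{1..3}) : m c = 0%N ->
  (p * 'X_c)@_m = 0.
Proof.
move=> hm; apply: memN_msupp_eq0; apply/negP => H.
have := perm_mem (msuppMX p U_(c)); move=> /(_ m); rewrite H => /esym /mapP [m' _ E].
by move: hm; rewrite E mnmDE mnm1E eqxx.
Qed.

Lemma cX0 (p : poly3) i j l :
  (p * 'X_o0)@_(t i j l) = if i is i'.+1 then p@_(t i' j l) else 0.
Proof. case: i => [|i]; first exact: coefMX_zero. by rewrite -t_add0 mcoeffMX. Qed.
Lemma cX1 (p : poly3) i j l :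
  (p * 'X_o1)@_(t i j l) = if j is j'.+1 then p@_(t i j' l) else 0.
Proof. case: j => [|j]; first exact: coefMX_zero. by rewrite -t_add1 mcoeffMX. Qed.
Lemma cX2 (p : poly3) i j l :
  (p * 'X_o2)@_(t i j l) = if l is l'.+1 then p@_(t i j l') else 0.
Proof. case: l => [|l]; first exact: coefMX_zero. by rewrite -t_add2 mcoeffMX. Qed.

Fixpoint Q2 (n : nat) : poly3 * poly3 :=
  match n with
  | 0 => (1, 'X_o0 + 'X_o1)
  | k.+1 => let: (a, b) := Q2 k in
      (b, b * 'X_o0 + b * 'X_o1 + b * 'X_o2 - a * 'X_o1 * 'X_o2)
  end.
Definition Q n := (Q2 n).1.
Lemma Q0 : Q 0 = 1. Proof. by []. Qed.
Lemma Q1 : Q 1 = 1 * 'X_o0 + 1 * 'X_o1. Proof. by rewrite !mul1r. Qed.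
Lemma Q2E n : Q2 n = (Q n, (Q2 n).2).
Proof. by rewrite /Q; case: (Q2 n). Qed.
Lemma QS n : Q n.+1 = (Q2 n).2.
Proof. by rewrite /Q /=; case: (Q2 n). Qed.
Lemma QSS n : Q n.+2 = Q n.+1 * 'X_o0 + Q n.+1 * 'X_o1 + Q n.+1 * 'X_o2 - Q n * 'X_o1 * 'X_o2.
Proof. by rewrite QS /= Q2E QS. Qed.

Definition f (i j l : nat) : nat :=
  if i is i'.+1 then ('C(i + j, j) * 'C(i' + l, l))%N else (l == 0)%N.

Lemma f_alt i j l : f i j l.+1 = ('C(i + j, j) * 'C(i + l, l.+1))%N.
Proof. rewrite /f; case: i => [|i]; first by rewrite (@bin_small _ l.+1) ?muln0.
by rewrite addnS addSn. Qed.

Lemma t_eq0 i j l : (t i j l == 0%MM) = [&& i == 0%N, j == 0%N & l == 0%N].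
Proof.
apply/eqP/idP.
- move/mnmP => H; have h0 := H o0; have h1 := H o1; have h2 := H o2.
  rewrite !mnm0E in h0 h1 h2.
  change (i = 0%N) in h0; change (j = 0%N) in h1; change (l = 0%N) in h2.
  by rewrite h0 h1 h2.
- by case/and3P => /eqP -> /eqP -> /eqP ->; apply/mnmP => -[[|[|[|k]]] Hk]; rewrite mnm0E.
Qed.

Lemma Qcoef n : forall i j l, (Q n)@_(t i j l) = ((i + j + l == n) * f i j l)%N%:R.
Proof.
suff H : forall i j l, (Q n)@_(t i j l) = ((i + j + l == n) * f i j l)%N%:R /\
                       (Q n.+1)@_(t i j l) = ((i + j + l == n.+1) * f i j l)%N%:R.
  by move=> i j l; case: (H i j l).
elim: n => [|n IH] i j l.
  have E0 : forall i j l, (Q 0)@_(t i j l) = ((i + j + l == 0) * f i j l)%N%:R.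
    move=> i' j' l'; rewrite Q0 mcoeff1 t_eq0.
    by case: i' => [|i'] //; case: j' => [|j'] //; case: l' => [|l'].
  split; first exact: E0.
  rewrite Q1 mcoeffD cX0 cX1.
  case: i => [|i]; case: j => [|j]; rewrite ?E0 ?add0r ?addr0 //.
  - by case: l => [|[|l]].
  - by case: i => [|i]; case: l => [|l]; rewrite ?addn0 ?addnS ?addSn.
  - by rewrite !addnS !addSn.
have IH1 := fun a b c => (IH a b c).1; have IH2 := fun a b c => (IH a b c).2.
split; first exact: IH2.
rewrite QSS mcoeffB !mcoeffD.
case: i => [|i]; case: j => [|j]; case: l => [|l]; rewrite ?cX2 /= ?cX1 /= ?cX0 /= ?IH1 ?IH2.
all: rewrite ?addnS ?addSn ?addn0 ?add0n ?eqSS; try (case: eqP => [E|_]); rewrite ?mul1n ?mul0n ?addr0 ?add0r ?subr0 //=.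
- by rewrite E.
- by rewrite subrr.
- by case: i E => [|i] _ /=; rewrite ?bin0.
- by rewrite f_alt -natrD !bin0 !mul1n binS addnC.
- case: i E => [|i] _ /=.
    by rewrite !bin0 ?add0n !muln1 -natrD !binSn.
  rewrite -natrD !bin0 !muln1; congr (_%:R).
  by rewrite !addSn !addnS [RHS]binS.
- rewrite f_alt; apply/eqP; rewrite subr_eq -!natrD eqr_nat; apply/eqP.
  rewrite !addSn !addnS !binS. ring.
Qed.

Definition sq : 3.-tuple poly3 := [tuple var3 0 ^+ 2; var3 1 ^+ 2; var3 2 ^+ 2].

Lemma tnth_sq (c : 'I_3) : tnth sq c = 'X_c ^+ 2.
Proof.
case: c => -[|[|[|k]]] Hk //; rewrite (tnth_nth 0) /=.
- by rewrite var0; congr (mpolyX _ _ ^+ 2); congr mnm1; apply/val_inj.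
- by rewrite var1; congr (mpolyX _ _ ^+ 2); congr mnm1; apply/val_inj.
- by rewrite var2; congr (mpolyX _ _ ^+ 2); congr mnm1; apply/val_inj.
Qed.

Lemma mulmn2_eq (a b : 'X_{1..3}) : (a *+ 2 == b *+ 2)%MM = (a == b).
Proof.
apply/eqP/eqP => [/mnmP H|->//]; apply/mnmP => c.
by have := H c; rewrite !mulmnE => /eqP; rewrite eqn_mul2r /= => /eqP.
Qed.

Lemma comp_sq_coef (p : poly3) m : (p \mPo sq)@_(m *+ 2) = p@_m.
Proof.
rewrite comp_mpolyE [in RHS](mpolyE p) !raddf_sum /=; apply: eq_bigr => m' _.
rewrite !mcoeffZ; congr (_ * _).
have -> : \prod_(i < 3) tnth sq i ^+ m' i = 'X_[m'] ^+ 2.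
  rewrite mpolyXE_id -prodrXl; apply: eq_bigr => c _.
  by rewrite tnth_sq -!exprM mulnC.
by rewrite mcoeffXn mcoeffX mulmn2_eq.
Qed.

Lemma compM (p q : poly3) : (p * q) \mPo sq = (p \mPo sq) * (q \mPo sq).
Proof. by have [H _] := comp_mpoly_is_multiplicative sq; apply: H. Qed.

Lemma compX (c : 'I_3) : 'X_c \mPo sq = 'X_c ^+ 2.
Proof. by rewrite comp_mpolyXU -(tnth_nth 0) tnth_sq. Qed.

Definition N n := Q n \mPo sq.
Fact Nf_key : unit. Proof. by []. Qed.
Definition Nf : nat -> Frac := locked_with Nf_key (fun n => tofrac (N n)).
Lemma NfE n : Nf n = tofrac (N n). Proof. by rewrite /Nf unlock. Qed.

Lemma xFE : xF = tofrac 'X_o0. Proof. by rewrite /xF var0. Qed.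
Lemma yFE : yF = tofrac 'X_o1. Proof. by rewrite /yF var1. Qed.
Lemma zFE : zF = tofrac 'X_o2. Proof. by rewrite /zF var2. Qed.

Lemma NfSS n : Nf n.+2 = Nf n.+1 * xF ^+ 2 + Nf n.+1 * yF ^+ 2 + Nf n.+1 * zF ^+ 2
   - Nf n * yF ^+ 2 * zF ^+ 2.
Proof.
rewrite !NfE /N QSS !comp_mpolyB !comp_mpolyD. rewrite !compM !compX.
by rewrite !tofracB !tofracD !tofracM xFE yFE zFE !expr2.
Qed.
Lemma Nf0 : Nf 0 = 1. Proof. by rewrite NfE /N Q0 comp_mpoly1 tofrac1. Qed.
Lemma Nf1 : Nf 1 = xF ^+ 2 + yF ^+ 2.
Proof. by rewrite NfE /N Q1 !mul1r !comp_mpolyD !compX !tofracD !tofracM xFE yFE !expr2. Qed.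

Lemma X_neq0 (c : 'I_3) : ('X_c : poly3) != 0.
Proof. by apply/eqP => H; have := @mcoeffX 3 int (mnm1 c) (mnm1 c); rewrite H mcoeff0 eqxx. Qed.
Lemma xF_neq0 : xF != 0. Proof. by rewrite xFE tofrac_eq0 X_neq0. Qed.
Lemma yF_neq0 : yF != 0. Proof. by rewrite yFE tofrac_eq0 X_neq0. Qed.
Lemma zF_neq0 : zF != 0. Proof. by rewrite zFE tofrac_eq0 X_neq0. Qed.

Lemma f_n00 n : f n 0 0 = 1%N.
Proof. by case: n => [|n] //=; rewrite !bin0. Qed.

Lemma Nf_neq0 n : Nf n != 0.
Proof.
rewrite NfE tofrac_eq0; apply/eqP => H.
have := comp_sq_coef (Q n) (t n 0 0); rewrite -/(N n) H mcoeff0 Qcoef.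
by rewrite !addn0 eqxx f_n00.
Qed.

Lemma Nf_inv n : Nf n.+2 * Nf n - Nf n.+1 ^+ 2 = xF ^+ 2 * (yF ^+ n) ^+ 2 * (zF ^+ n.+1) ^+ 2.
Proof.
elim: n => [|n IH]; first by rewrite NfSS Nf0 Nf1 !expr0 expr1; ring.
apply: (@eq_trans _ _ (yF ^+ 2 * zF ^+ 2 * (Nf n.+2 * Nf n - Nf n.+1 ^+ 2))).
  rewrite (NfSS n.+1) (NfSS n). ring.
rewrite IH !exprS. ring.
Qed.


Lemma Nf_SS' n : Nf n.+2 = (Nf n.+1 ^+ 2 + xF ^+ 2 * (yF ^+ n) ^+ 2 * (zF ^+ n.+1) ^+ 2) / Nf n.
Proof.
apply: (mulIf (Nf_neq0 n)); rewrite divfK ?Nf_neq0 //.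
rewrite -Nf_inv. ring.
Qed.

Lemma MpairS n : Mpair n.+1 = let: (a, b) := Mpair n in (b, (xF ^+ 2 + b ^+ 2) / a).
Proof. by []. Qed.

Lemma base_gen (F : fieldType) (x y z : F) : y != 0 -> z != 0 ->
  (x ^+ 2 + y ^+ 2) / z = (x ^+ 2 + y ^+ 2) * y / (y * z).
Proof. by move=> hy hz; field; rewrite hy hz. Qed.

Lemma base_gen1 (F : fieldType) (y : F) : y = 1 * y / (1 * 1).
Proof. by rewrite !mul1r invr1 mulr1. Qed.

Lemma step_gen (F : fieldType) (x y z n0 n1 yk zk : F) :
  y != 0 -> z != 0 -> n0 != 0 -> yk != 0 -> zk != 0 ->
  (x ^+ 2 + (n1 * y / ((y * yk) * (z * zk))) ^+ 2) / (n0 * y / (yk * zk)) =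
  ((n1 ^+ 2 + x ^+ 2 * yk ^+ 2 * (z * zk) ^+ 2) / n0) * y / ((y * (y * yk)) * (z * (z * zk))).
Proof.
move=> hy hz h0 hyk hzk; field.
by rewrite hy hz h0 hyk hzk.
Qed.

Lemma Mpair_eq n : Mpair n = (Nf n * yF / (yF ^+ n * zF ^+ n),
                              Nf n.+1 * yF / (yF ^+ n.+1 * zF ^+ n.+1)).
Proof.
have y0 := yF_neq0; have z0 := zF_neq0.
elim: n => [|n IH].
  rewrite Nf0 Nf1 !expr0 !expr1 [Mpair 0]/=.
  apply/pair_equal_spec; split.
  by rewrite !mul1r invr1 mulr1.
  exact: (@base_gen Frac xF yF zF y0 z0).
rewrite MpairS IH; apply/pair_equal_spec; split; first by [].
rewrite Nf_SS' !(exprS yF) !(exprS zF).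
exact: (@step_gen Frac xF yF zF (Nf n) (Nf n.+1) (yF ^+ n) (zF ^+ n) y0 z0 (Nf_neq0 n)
   (expf_neq0 n y0) (expf_neq0 n z0)).
Qed.

Lemma gen3 (F : fieldType) (N y yk zk : F) : y != 0 -> yk != 0 -> zk != 0 ->
  N * y / ((y * yk) * zk) * (yk * zk) = N.
Proof. by move=> hy hyk hzk; field; rewrite hy hyk hzk. Qed.

End Alg.

Module AlgB.
Import mpoly.
Import Alg.
Lemma P_eq (P : poly3) n : (1 <= n)%N -> is_P_one_over n P -> P \mPo sq = N n.
Proof.
case: n => [//|n] _ [_ H].
have y0 := yF_neq0; have z0 := zF_neq0.
move: H; rewrite /M_one_over Mpair_eq => H.
have {H} H : Nf n.+1 * yF / (yF ^+ n.+1 * zF ^+ n.+1) =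
   tofrac (P \mPo sq) / tofrac (var3 1 ^+ n * var3 2 ^+ n.+1) := H.
have D0 : tofrac (var3 1 ^+ n * var3 2 ^+ n.+1) = yF ^+ n * zF ^+ n.+1.
  by rewrite tofracM !tofracXn.
rewrite D0 in H.
have hd : yF ^+ n * zF ^+ n.+1 != 0.
  exact: (mulf_neq0 (expf_neq0 n y0) (expf_neq0 n.+1 z0)).
have H2 : tofrac (P \mPo sq) = Nf n.+1.
  rewrite -(divfK hd (tofrac (P \mPo sq))) -H (exprS yF).
  exact: (@gen3 Frac (Nf n.+1) yF (yF ^+ n) (zF ^+ n.+1) y0 (expf_neq0 n y0) (expf_neq0 _ z0)).
by apply/eqP; rewrite -tofrac_eq H2 NfE.
Qed.

Lemma coefA_closed (P : poly3) n i j : (1 <= n)%N -> is_P_one_over n P ->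
  coefA P i j n = if (i + j <= n)%N then (f i j (n - i - j))%:R else 0.
Proof.
move=> n1 HP; rewrite /coefA; case: ifP => // hij.
have := comp_sq_coef P (t i j (n - i - j)); rewrite (@P_eq P n n1 HP) /N comp_sq_coef.
rewrite Qcoef => <-.
have -> : (i + j + (n - i - j) == n)%N by apply/eqP; rewrite -subnDA subnKC.
by rewrite mul1n.
Qed.
End AlgB.

From mathcomp Require Import all_classical all_reals all_analysis.
From mathcomp Require Import lra zify.
Import Order.TTheory GRing.Theory Num.Theory.
Import numFieldNormedType.Exports.
Local Open Scope classical_set_scope.
Local Open Scope ring_scope.

Section Bin.
Local Open Scope nat_scope.
Variables a b : nat.
Let m := (a + b)%N.
Let T (i : nat) := ('C(m, i) * (a ^ (m - i) * b ^ i))%N.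

Lemma T_step i : i < m -> T i.+1 * (i.+1 * a) = T i * ((m - i) * b).
Proof.
move=> im; rewrite /T.
have -> : m - i = (m - i.+1).+1 by rewrite subnSK.
rewrite expnS expnSr.
have h := mul_bin_left m i.
transitivity ((i.+1 * 'C(m, i.+1)) * (a ^ (m - i.+1) * a * b ^ i * b))%N; first ring.
rewrite h -(subnSK im); ring.
Qed.

Hypothesis a0 : 0 < a.
Hypothesis b0 : 0 < b.

Lemma T_up i : i < b -> T i <= T i.+1.
Proof.
move=> ib; have im : i < m by rewrite /m; lia.
rewrite -(@leq_pmul2r (i.+1 * a)) ?muln_gt0 // T_step //.
apply: leq_mul => //; rewrite /m; nia.
Qed.

Lemma T_down i : b <= i -> T i.+1 <= T i.
Proof.
move=> bi; case: (ltnP i m) => im; last first.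
  by rewrite /T bin_small ?mul0n //; lia.
rewrite -(@leq_pmul2r (i.+1 * a)) ?muln_gt0 // T_step //.
apply: leq_mul => //; rewrite /m; nia.
Qed.

Lemma T_max i : T i <= T b.
Proof.
case: (leqP i b) => ib.
  have H : forall d, d <= b -> T (b - d) <= T b.
    elim=> [|d IH] hd; first by rewrite subn0.
    apply: leq_trans (IH (ltnW hd)).
    have -> : b - d = (b - d.+1).+1 by lia.
    apply: T_up; lia.
  by have := H (b - i) (leq_subr _ _); rewrite subKn.
have H : forall d, T (b + d) <= T b.
  elim=> [|d IH]; first by rewrite addn0.
  by apply: leq_trans IH; rewrite addnS; apply: T_down; rewrite leq_addr.
by have := H (i - b); rewrite subnKC // ltnW.
Qed.

Lemma binom_upper : 'C(m, b) * (a ^ a * b ^ b) <= m ^ m.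
Proof.
rewrite {2}/m expnDn (bigD1 (inord b)) //= inordK; last by rewrite ltnS /m leq_addl.
have -> : m - b = a by rewrite /m addnK.
exact: leq_addr.
Qed.

Lemma binom_lower : m ^ m <= m.+1 * ('C(m, b) * (a ^ a * b ^ b)).
Proof.
rewrite {1}/m expnDn.
have -> : ('C(m, b) * (a ^ a * b ^ b) = T b)%N by rewrite /T /m addnK.
apply: leq_trans (_ : \sum_(i < m.+1) T b <= _).
  by apply: leq_sum => i _; exact: T_max.
by rewrite sum_nat_const card_ord.
Qed.
End Bin.

Section An.
Variable R : realType.

Lemma inv_n : (fun n : nat => (n%:R : R)^-1) @ \oo --> 0.
Proof. rewrite -cvg_shiftS; exact: cvg_harmonic. Qed.

Lemma div_n (u : nat -> R) (c : R) : u @ \oo --> c -> (fun n => u n / n%:R) @ \oo --> 0.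
Proof.
move=> hu; have := cvgM hu inv_n; rewrite mulr0; exact.
Qed.

Lemma ln_n_over_n : (fun n : nat => ln (n%:R : R) / n%:R) @ \oo --> 0.
Proof.
apply/cvgrPdist_le => e e0.
near=> n.
have n1 : 1 <= (n%:R : R) by near: n; exact: nbhs_infty_ger.
have n2 : 2 / e ^+ 2 <= (n%:R : R) by near: n; exact: nbhs_infty_ger.
have n0 : 0 < (n%:R : R) by lra.
rewrite sub0r normrN ger0_norm ?divr_ge0 ?ln_ge0 ?ler0n //.
rewrite ler_pdivrMr //.
have h1 : (n%:R : R) <= expR (e * n%:R).
  apply: le_trans (expR_ge1Dxn 1 _); last by rewrite mulr_ge0 ?ler0n ?ltW.
  have -> : (2`!%:R : R) = 2 by [].
  have h2 : 2 <= n%:R * e ^+ 2 by rewrite -ler_pdivrMr ?exprn_gt0.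
  have h3 : n%:R * 2 <= n%:R * (n%:R * e ^+ 2) by rewrite ler_pM2l.
  rewrite exprMn; nra.
rewrite -(expRK (e * n%:R)) ler_ln ?posrE ?expR_gt0 //.
Unshelve. all: by end_near.
Qed.

Lemma cvg_near_eq (f g : nat -> R) (l : R) :
  (\forall n \near \oo, f n = g n) -> f @ \oo --> l -> g @ \oo --> l.
Proof. move=> e hf; apply: cvg_trans hf; exact: near_eq_cvg. Qed.

Definition phi (x : R) := x * ln x.

Lemma ln_cvg (u : nat -> R) (c : R) : 0 < c -> u @ \oo --> c ->
  (fun n => ln (u n)) @ \oo --> ln c.
Proof. move=> c0 hu; exact: (continuous_cvg _ (continuous_ln c0)). Qed.

Lemma phi_cvg (u : nat -> R) (c : R) : 0 < c -> u @ \oo --> c ->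
  (fun n => phi (u n)) @ \oo --> phi c.
Proof.
move=> c0 hu; have := cvgM hu (ln_cvg _ _ c0 hu); exact.
Qed.

Lemma lnNM (x y : nat) : (0 < x)%N -> (0 < y)%N -> ln ((x * y)%:R : R) = ln x%:R + ln y%:R.
Proof. by move=> hx hy; rewrite natrM lnM // posrE ltr0n. Qed.

Lemma lnNX (x : nat) : (0 < x)%N -> ln ((x ^ x)%:R : R) = phi x%:R.
Proof. by move=> hx; rewrite natrX lnXn ?ltr0n // /phi mulr_natl. Qed.

Lemma theta_bounds (a b : nat) : (0 < a)%N -> (0 < b)%N ->
  0 <= phi (a + b)%:R - phi a%:R - phi b%:R - ln ('C(a + b, b))%:R <= ln ((a + b).+1)%:R.
Proof.
move=> a0 b0.
have C0 : (0 < 'C(a + b, b))%N by rewrite bin_gt0 leq_addl.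
have aa0 : (0 < a ^ a)%N by rewrite expn_gt0 a0.
have bb0 : (0 < b ^ b)%N by rewrite expn_gt0 b0.
have m0 : (0 < a + b)%N by rewrite addn_gt0 a0.
have mm0 : (0 < (a + b) ^ (a + b))%N by rewrite expn_gt0 m0.
have up := binom_upper a b.
have lo := binom_lower a b a0 b0.
have up' : ln (('C(a + b, b) * (a ^ a * b ^ b))%:R : R) <= ln (((a + b) ^ (a + b))%:R).
  by rewrite ler_ln ?posrE ?ltr0n ?muln_gt0 ?C0 ?aa0 ?bb0 // ler_nat.
have lo' : ln ((((a + b) ^ (a + b))%:R : R)) <= ln (((a + b).+1 * ('C(a + b, b) * (a ^ a * b ^ b)))%:R).
  by rewrite ler_ln ?posrE ?ltr0n ?muln_gt0 ?C0 ?aa0 ?bb0 // ler_nat.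
rewrite !lnNM ?muln_gt0 ?C0 ?aa0 ?bb0 // !lnNX // in up' lo'.
apply/andP; split; lra.
Qed.

Lemma pos_ev (u : nat -> nat) (c : R) : 0 < c ->
  (fun n => (u n)%:R / n%:R) @ \oo --> c -> \forall n \near \oo, (0 < u n)%N.
Proof.
move=> c0 hu; near=> n.
have : 0 < (u n)%:R / (n%:R : R) by near: n; exact: (cvgr_gt c hu 0 c0).
by case: (u n) => [|k] //=; rewrite mul0r ltxx.
Unshelve. all: by end_near.
Qed.

Lemma BL (a b : nat -> nat) (al be : R) : 0 < al -> 0 < be ->
  (fun n => (a n)%:R / n%:R) @ \oo --> al ->
  (fun n => (b n)%:R / n%:R) @ \oo --> be ->
  (fun n => ln (('C(a n + b n, b n))%:R : R) / n%:R) @ \oo --> phi (al + be) - phi al - phi be.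
Proof.
move=> al0 be0 ha hb.
have hU : (fun n => ((a n + b n)%:R : R) / n%:R) @ \oo --> al + be.
  have -> : (fun n => ((a n + b n)%:R : R) / n%:R) = (fun n => (a n)%:R / n%:R + (b n)%:R / n%:R).
    by apply/funext => n; rewrite natrD mulrDl.
  exact: cvgD ha hb.
have hV : (fun n => (((a n + b n).+1)%:R : R) / n%:R) @ \oo --> al + be.
  have -> : (fun n => (((a n + b n).+1)%:R : R) / n%:R) =
            (fun n => ((a n + b n)%:R : R) / n%:R + (n%:R)^-1).
    by apply/funext => n; rewrite -addn1 natrD mulrDl mul1r.
  rewrite -[X in _ --> X]addr0; exact: cvgD hU inv_n.
have ab0 : 0 < al + be by rewrite addr_gt0.
have hlnm : (fun n => ln ((((a n + b n).+1)%:R : R)) / n%:R) @ \oo --> 0.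
  apply: (@cvg_near_eq (fun n => ln ((((a n + b n).+1)%:R : R) / n%:R) / n%:R
                                 + ln (n%:R : R) / n%:R)).
    near=> n.
    have n1 : (0 < n)%N by near: n; exact: nbhs_infty_gt.
    by rewrite ln_div ?posrE ?ltr0n // mulrBl subrK.
  rewrite -[X in _ --> X]addr0; apply: cvgD; last exact: ln_n_over_n.
  by have := div_n _ _ (ln_cvg _ _ ab0 hV).
have pa := pos_ev _ _ al0 ha; have pb := pos_ev _ _ be0 hb.
pose th := fun n => phi (a n + b n)%:R - phi (a n)%:R - phi (b n)%:R - ln (('C(a n + b n, b n))%:R : R).
have hth : (fun n => th n / n%:R) @ \oo --> 0.
  apply: (@squeeze_cvgr _ _ _ _ (fun _ => 0) (fun n => ln ((((a n + b n).+1)%:R : R)) / n%:R)); last 2 first.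
  - exact: cvg_cst.
  - exact: hlnm.
  near=> n.
  have a0 : (0 < a n)%N by near: n; exact: pa.
  have b0 : (0 < b n)%N by near: n; exact: pb.
  have n0 : (0 < n)%N by near: n; exact: nbhs_infty_gt.
  have /andP[h1 h2] := theta_bounds _ _ a0 b0.
  apply/andP; split; first by rewrite divr_ge0 // ler0n.
  by rewrite ler_pM2r ?invr_gt0 ?ltr0n.
apply: (@cvg_near_eq (fun n => phi ((a n + b n)%:R / n%:R) - phi ((a n)%:R / n%:R)
    - phi ((b n)%:R / n%:R) - th n / n%:R)).
  near=> n.
  have a0 : (0 < a n)%N by near: n; exact: pa.
  have b0 : (0 < b n)%N by near: n; exact: pb.
  have n0 : (0 < n)%N by near: n; exact: nbhs_infty_gt.
  have m0 : (0 < a n + b n)%N by rewrite addn_gt0 a0.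
  rewrite /th /phi !ln_div ?posrE ?ltr0n // natrD; ring.
rewrite -[X in _ --> X]subr0; apply: cvgB; last exact: hth.
apply: cvgB; [apply: cvgB|]; apply: phi_cvg => //.
Unshelve. all: by end_near.
Qed.

Lemma target_eq (xi eta : R) : 0 < xi -> 0 < eta -> xi + eta < 1 ->
  let H := fun p : R => - (p * ln p) - (1 - p) * ln (1 - p) in
  (1 - eta) * H (xi / (1 - eta)) + (xi + eta) * H (xi / (xi + eta)) =
  (phi (xi + eta) - phi xi - phi eta) + (phi (xi + (1 - xi - eta)) - phi xi - phi (1 - xi - eta)).
Proof.
move=> x0 e0 xe H; rewrite /H /phi.
have h1 : 0 < 1 - eta by lra.
have h2 : 0 < xi + eta by lra.
have h3 : 0 < 1 - xi - eta by lra.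
have n1 : 1 - eta != 0 by rewrite gt_eqF.
have n2 : xi + eta != 0 by rewrite gt_eqF.
have -> : 1 - xi / (1 - eta) = (1 - xi - eta) / (1 - eta) by field.
have -> : 1 - xi / (xi + eta) = eta / (xi + eta) by field.
have -> : xi + (1 - xi - eta) = 1 - eta by ring.
rewrite !ln_div ?posrE //.
field.
by rewrite n1 n2.
Qed.
End An.

Lemma f_pred i j l : (0 < i)%N -> Alg.f i j l = ('C(i + j, j) * 'C(i.-1 + l, l))%N.
Proof. by case: i. Qed.

Theorem proposition7p3 (R : realType) (xi eta : R) (i j : nat -> nat)
    (P : nat -> poly3) :
  0 < xi -> 0 < eta -> xi + eta < 1 ->
  (fun n : nat => (i n)%:R / n%:R : R) @ \oo --> xi ->
  (fun n : nat => (j n)%:R / n%:R : R) @ \oo --> eta ->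
  (forall n : nat, (1 <= n)%N -> is_P_one_over n (P n)) ->
  let H := fun p : R => - (p * ln p) - (1 - p) * ln (1 - p) in
  (exists N : nat, forall n : nat, (N <= n)%N ->
      (0 < coefA (P n) (i n) (j n) n)%R) /\
  (fun n : nat => ln ((coefA (P n) (i n) (j n) n)%:~R : R) / n%:R) @ \oo -->
     (1 - eta) * H (xi / (1 - eta)) + (xi + eta) * H (xi / (xi + eta)).
Proof.
move=> xi0 eta0 xe1 hi hj HP H.
have ev_i := pos_ev _ _ _ xi0 hi.
have hij : (fun n => ((i n + j n)%:R : R) / n%:R) @ \oo --> xi + eta.
  have -> : (fun n => ((i n + j n)%:R : R) / n%:R) = (fun n => (i n)%:R / n%:R + (j n)%:R / n%:R).
    by apply/funext => n; rewrite natrD mulrDl.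
  exact: cvgD hi hj.
have ev_lt : \forall n \near \oo, (i n + j n < n)%N.
  near=> n.
  have n0 : (0 < n)%N by near: n; exact: nbhs_infty_gt.
  have : ((i n + j n)%:R : R) / n%:R < 1 by near: n; exact: (cvgr_lt _ hij 1 xe1).
  by rewrite ltr_pdivrMr ?ltr0n // mul1r ltr_nat.
pose l n := (n - i n - j n)%N.
have closed : \forall n \near \oo, coefA (P n) (i n) (j n) n =
    (('C(i n + j n, j n) * 'C((i n).-1 + l n, l n))%N)%:R.
  near=> n.
  have n0 : (0 < n)%N by near: n; exact: nbhs_infty_gt.
  have i0 : (0 < i n)%N by near: n; exact: ev_i.
  have lt : (i n + j n < n)%N by near: n; exact: ev_lt.
  rewrite (@AlgB.coefA_closed (P n) n (i n) (j n) n0 (HP n n0)) ifT ?(ltnW lt) //.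
  by rewrite f_pred.
have pos : \forall n \near \oo, (0 < 'C(i n + j n, j n))%N && (0 < 'C((i n).-1 + l n, l n))%N.
  by near=> n; rewrite !bin_gt0 leq_addl leq_addl.
split.
  have [N _ HN] : \forall n \near \oo, (0 < coefA (P n) (i n) (j n) n)%R.
    near=> n.
    have p : (0 < 'C(i n + j n, j n))%N && (0 < 'C((i n).-1 + l n, l n))%N.
      by near: n; exact: pos.
    have -> : coefA (P n) (i n) (j n) n = (('C(i n + j n, j n) * 'C((i n).-1 + l n, l n))%N)%:R.
      by near: n; exact: closed.
    by rewrite ltr0n muln_gt0 p.
  by exists N => n hn; apply: HN.
have hpred : (fun n => (((i n).-1)%:R : R) / n%:R) @ \oo --> xi.
  apply: (@cvg_near_eq _ (fun n => (i n)%:R / n%:R - (n%:R)^-1)).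
    near=> n.
    have i0 : (0 < i n)%N by near: n; exact: ev_i.
    by rewrite -{1}(prednK i0) -natr1 mulrDl mul1r addrK.
  rewrite -[X in _ --> X]subr0; exact: cvgB hi (inv_n R).
have hl : (fun n => ((l n)%:R : R) / n%:R) @ \oo --> 1 - xi - eta.
  apply: (@cvg_near_eq _ (fun n => 1 - (i n)%:R / n%:R - (j n)%:R / n%:R)).
    near=> n.
    have n0 : (0 < n)%N by near: n; exact: nbhs_infty_gt.
    have lt : (i n + j n < n)%N by near: n; exact: ev_lt.
    have nz : (n%:R : R) != 0 by rewrite pnatr_eq0 -lt0n.
    rewrite /l natrB; last lia.
    rewrite natrB; last lia.
    by rewrite !mulrBl divff.
  apply: cvgB => //; apply: cvgB => //; exact: cvg_cst.
have B1 := BL _ i j xi eta xi0 eta0 hi hj.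
have h1e : 0 < 1 - xi - eta by lra.
have B2 := BL _ (fun n => (i n).-1) l xi (1 - xi - eta) xi0 h1e hpred hl.
have -> : (1 - eta) * H (xi / (1 - eta)) + (xi + eta) * H (xi / (xi + eta)) =
  (phi R (xi + eta) - phi R xi - phi R eta) + (phi R (xi + (1 - xi - eta)) - phi R xi - phi R (1 - xi - eta))
  := target_eq _ _ _ xi0 eta0 xe1.
apply: (@cvg_near_eq _ (fun n => ln ('C(i n + j n, j n)%:R : R) / n%:R
    + ln ('C((i n).-1 + l n, l n)%:R : R) / n%:R)); last exact: cvgD B1 B2.
near=> n.
have p : (0 < 'C(i n + j n, j n))%N && (0 < 'C((i n).-1 + l n, l n))%N.
  by near: n; exact: pos.
have -> : coefA (P n) (i n) (j n) n = (('C(i n + j n, j n) * 'C((i n).-1 + l n, l n))%N)%:R.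
  by near: n; exact: closed.
case/andP: p => p1 p2.
by rewrite natz /= lnNM // mulrDl.
Unshelve. all: by end_near.
Qed.
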